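(* Let $I$ be an inverse semigroup [respectively, inverse monoid] generated as a semigroup [monoid] by a (not necessarily finite) set $\Sigma$, and let $L$ be the idempotent problem of $I$ with respect to $\Sigma$. Then the map sending each element $s\in I$ to the $\equiv_L$-class of any word over $\Sigma$ representing $s$ is a well-defined, surjective, idempotent-pure morphism from $I$ onto the syntactic semigroup $M^+(L)$ [respectively, onto the syntactic monoid $M(L)$]. Moreover, its kernel is the greatest idempotent-pure congruence on $I$. *)

(* Defs.v *)
From Stdlib Require Import List.
Import ListNotations.
Set Implicit Arguments.

Definition associative_op (S : Type) (mul : S -> S -> S) : Prop :=
  forall a b c, mul a (mul b c) = mul (mul a b) c.

Definition idempotent (S : Type) (mul : S -> S -> S) (e : S) : Prop :=
  mul e e = e.

Definition is_inverse_of (S : Type) (mul : S -> S -> S) (a b : S) : Prop :=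
  mul (mul a b) a = a /\ mul (mul b a) b = b.

Definition inverse_semigroup (S : Type) (mul : S -> S -> S) : Prop :=
  associative_op mul /\
  forall a, exists b, is_inverse_of mul a b /\
                 forall b', is_inverse_of mul a b' -> b' = b.

Definition is_identity (S : Type) (mul : S -> S -> S) (one : S) : Prop :=
  forall a, mul one a = a /\ mul a one = a.

Definition inverse_monoid (S : Type) (mul : S -> S -> S) (one : S) : Prop :=
  inverse_semigroup mul /\ is_identity mul one.

Definition sg_morphism (S T : Type) (mulS : S -> S -> S) (mulT : T -> T -> T)
  (f : S -> T) : Prop :=
  forall a b, f (mulS a b) = mulT (f a) (f b).

Definition surjective_map (S T : Type) (f : S -> T) : Prop :=
  forall t, exists s, f s = t.

Definition idempotent_pure_map (S T : Type) (mulS : S -> S -> S)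
  (mulT : T -> T -> T) (f : S -> T) : Prop :=
  forall s, idempotent mulT (f s) -> idempotent mulS s.

Definition kernel (S T : Type) (f : S -> T) : S -> S -> Prop :=
  fun a b => f a = f b.

Definition congruence (S : Type) (mul : S -> S -> S) (R : S -> S -> Prop) : Prop :=
  (forall a, R a a) /\ (forall a b, R a b -> R b a) /\
  (forall a b c, R a b -> R b c -> R a c) /\
  (forall a b c, R a b -> R (mul c a) (mul c b) /\ R (mul a c) (mul b c)).

Definition idempotent_pure_congruence (S : Type) (mul : S -> S -> S)
  (R : S -> S -> Prop) : Prop :=
  congruence mul R /\
  forall a e, idempotent mul e -> R a e -> idempotent mul a.

Definition greatest_idempotent_pure_congruence (S : Type) (mul : S -> S -> S)
  (R : S -> S -> Prop) : Prop :=
  idempotent_pure_congruence mul R /\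
  forall R', idempotent_pure_congruence mul R' -> forall a b, R' a b -> R a b.

(* Words over Sigma are lists; Sigma^+ = nonempty lists. *)

(* value in I of the nonempty word a :: w (semigroup generated by gen) *)
Definition eval_sg (Sigma S : Type) (mul : S -> S -> S) (gen : Sigma -> S)
  (a : Sigma) (w : list Sigma) : S :=
  fold_left (fun x b => mul x (gen b)) w (gen a).

Definition eval_mon (Sigma S : Type) (mul : S -> S -> S) (one : S)
  (gen : Sigma -> S) (w : list Sigma) : S :=
  fold_left (fun x b => mul x (gen b)) w one.

Definition idem_problem_sg (Sigma S : Type) (mul : S -> S -> S)
  (gen : Sigma -> S) (w : list Sigma) : Prop :=
  exists a w', w = a :: w' /\ idempotent mul (eval_sg mul gen a w').

Definition idem_problem_mon (Sigma S : Type) (mul : S -> S -> S) (one : S)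
  (gen : Sigma -> S) (w : list Sigma) : Prop :=
  idempotent mul (eval_mon mul one gen w).

Definition synt_eq (Sigma : Type) (L : list Sigma -> Prop) (u v : list Sigma) : Prop :=
  forall x y : list Sigma, L (x ++ u ++ y) <-> L (x ++ v ++ y).

(* (M, mulM) with q is (a copy of) the syntactic semigroup M^+(L) = Sigma^+ / ==_L:
   q is a surjective morphism from Sigma^+ onto M whose kernel is ==_L. *)
Definition is_syntactic_semigroup (Sigma M : Type) (L : list Sigma -> Prop)
  (mulM : M -> M -> M) (q : list Sigma -> M) : Prop :=
  associative_op mulM /\
  (forall m, exists a w, q (a :: w) = m) /\
  (forall u v, u <> [] -> v <> [] -> q (u ++ v) = mulM (q u) (q v)) /\
  (forall u v, u <> [] -> v <> [] -> (q u = q v <-> synt_eq L u v)).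

(* (M, mulM, oneM) with q is (a copy of) the syntactic monoid M(L) = Sigma^{*} / ==_L. *)
Definition is_syntactic_monoid (Sigma M : Type) (L : list Sigma -> Prop)
  (mulM : M -> M -> M) (oneM : M) (q : list Sigma -> M) : Prop :=
  associative_op mulM /\ is_identity mulM oneM /\
  (forall m, exists w, q w = m) /\
  q [] = oneM /\
  (forall u v, q (u ++ v) = mulM (q u) (q v)) /\
  (forall u v, q u = q v <-> synt_eq L u v).

(* Main.v *)
Require Import Defs.
From Stdlib Require Import List.
From Stdlib Require Import IndefiniteDescription.
Import ListNotations.

Lemma inv_sym (S : Type) (mul : S -> S -> S) a b :
  is_inverse_of mul a b -> is_inverse_of mul b a.
Proof. unfold is_inverse_of; tauto. Qed.

Lemma idem_prod (S : Type) (mul : S -> S -> S) e f :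
  inverse_semigroup mul -> idempotent mul e -> idempotent mul f ->
  idempotent mul (mul e f).
Proof.
  intros [A U] He Hf. unfold idempotent in *.
  destruct (U (mul e f)) as [x [[Hx1 Hx2] _]].
  set (y := mul (mul f x) e).
  assert (Hy : mul y y = y).
  { unfold y.
    replace (mul (mul (mul f x) e) (mul (mul f x) e))
      with (mul (mul f (mul (mul x (mul e f)) x)) e).
    - rewrite Hx2. reflexivity.
    - rewrite !A. reflexivity. }
  destruct (U y) as [z [Hz Huz]].
  assert (E1 : y = z). { apply Huz. split; rewrite Hy; exact Hy. }
  assert (E2 : mul e f = z).
  { apply Huz. split.
    - unfold y.
      replace (mul (mul (mul (mul f x) e) (mul e f)) (mul (mul f x) e))
        with (mul (mul f (mul (mul x (mul e f)) x)) e).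
      + rewrite Hx2. reflexivity.
      + transitivity (mul (mul (mul f x) (mul e e)) (mul (mul f f) (mul x e))).
        * rewrite He, Hf. rewrite !A. reflexivity.
        * rewrite !A. reflexivity.
    - unfold y.
      replace (mul (mul (mul e f) (mul (mul f x) e)) (mul e f))
        with (mul (mul (mul e f) x) (mul e f)).
      + exact Hx1.
      + replace (mul (mul e f) (mul (mul f x) e))
          with (mul (mul e (mul f f)) (mul x e)) by (rewrite !A; reflexivity).
        rewrite Hf.
        replace (mul (mul (mul e f) (mul x e)) (mul e f))
          with (mul (mul (mul e f) x) (mul (mul e e) f)) by (rewrite !A; reflexivity).
        rewrite He. reflexivity. }
  rewrite E2, <- E1. exact Hy.
Qed.

Lemma pure_from_sat (I M : Type) (mul : I -> I -> I) (mulM : M -> M -> M)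
  (phi : I -> M) :
  inverse_semigroup mul -> sg_morphism mul mulM phi ->
  (forall a b, phi a = phi b -> idempotent mul a -> idempotent mul b) ->
  idempotent_pure_map mul mulM phi.
Proof.
  intros HI Hm Hsat s Hs. pose proof HI as [A U].
  unfold idempotent in Hs.
  destruct (U s) as [t [[H1 H2] _]].
  assert (Its : idempotent mul (mul t s)).
  { unfold idempotent. rewrite A, H2. reflexivity. }
  assert (Ist : idempotent mul (mul s t)).
  { unfold idempotent. rewrite A, H1. reflexivity. }
  set (g := mul (mul t s) (mul s t)).
  assert (Ig : idempotent mul g) by (apply idem_prod; auto).
  assert (Pt : phi t = phi g).
  { rewrite <- H2 at 1. rewrite !Hm. rewrite <- Hs.
    rewrite <- Hm. rewrite <- !Hm. unfold g. rewrite !A. reflexivity. }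
  assert (Ptt : phi t = mulM (phi t) (phi t)).
  { rewrite Pt, <- Hm. unfold idempotent in Ig. rewrite Ig. reflexivity. }
  apply (Hsat (mul (mul s t) (mul t s))).
  - transitivity (phi (mul (mul s t) s)); [| rewrite H1; reflexivity].
    rewrite (Hm (mul s t) s), (Hm s t), Ptt, <- (Hm t t), <- (Hm s (mul t t)), <- Hm.
    f_equal. rewrite !A. reflexivity.
  - apply idem_prod; auto.
Qed.

Lemma fold_mul (Sigma I : Type) (mul : I -> I -> I) (gen : Sigma -> I) :
  associative_op mul -> forall w x y,
  fold_left (fun x b => mul x (gen b)) w (mul x y) =
  mul x (fold_left (fun x b => mul x (gen b)) w y).
Proof.
  intros A w; induction w as [|c w IH]; intros x y; simpl; auto.
  rewrite <- A. apply IH.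
Qed.

Lemma eval_app (Sigma I : Type) (mul : I -> I -> I) (gen : Sigma -> I) :
  associative_op mul -> forall a w1 b w2,
  eval_sg mul gen a (w1 ++ b :: w2) = mul (eval_sg mul gen a w1) (eval_sg mul gen b w2).
Proof.
  intros A a w1 b w2. unfold eval_sg. rewrite fold_left_app. simpl.
  apply fold_mul; auto.
Qed.

Lemma Lcons (Sigma I : Type) (mul : I -> I -> I) (gen : Sigma -> I) c z :
  idem_problem_sg mul gen (c :: z) <-> idempotent mul (eval_sg mul gen c z).
Proof.
  split.
  - intros [a [w [E H]]]. inversion E; subst; auto.
  - intros H. exists c, z; auto.
Qed.

Definition ctxl (Sigma I : Type) (mul : I -> I -> I) (gen : Sigma -> I)
  (x : list Sigma) (s : I) : I :=
  match x with [] => s | c :: x' => mul (eval_sg mul gen c x') s end.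
Definition ctxr (Sigma I : Type) (mul : I -> I -> I) (gen : Sigma -> I)
  (s : I) (y : list Sigma) : I :=
  match y with [] => s | d :: y' => mul s (eval_sg mul gen d y') end.

Arguments ctxl {Sigma I}.
Arguments ctxr {Sigma I}.

Lemma key_sg (Sigma I : Type) (mul : I -> I -> I) (gen : Sigma -> I) :
  associative_op mul -> forall x a w y,
  idem_problem_sg mul gen (x ++ (a :: w) ++ y) <->
  idempotent mul (ctxr mul gen (ctxl mul gen x (eval_sg mul gen a w)) y).
Proof.
  intros A x a w y.
  destruct x as [|c x']; destruct y as [|d y']; cbn [app ctxl ctxr].
  - rewrite app_nil_r. apply Lcons.
  - rewrite Lcons, eval_app; auto. reflexivity.
  - rewrite app_nil_r, Lcons, eval_app; auto. reflexivity.
  - rewrite Lcons, !eval_app; auto. rewrite A. reflexivity.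
Qed.

Lemma compat_ctx (Sigma I : Type) (mul : I -> I -> I) (gen : Sigma -> I)
  (R : I -> I -> Prop) :
  congruence mul R -> forall s t x y, R s t ->
  R (ctxr mul gen (ctxl mul gen x s) y) (ctxr mul gen (ctxl mul gen x t) y).
Proof.
  intros [_ [_ [_ C]]] s t x y H.
  assert (H' : R (ctxl mul gen x s) (ctxl mul gen x t)).
  { destruct x; simpl; auto. apply C; auto. }
  destruct y; simpl; auto. apply C; auto.
Qed.

Lemma sg_part : forall (I Sigma : Type) (mul : I -> I -> I) (gen : Sigma -> I),
     inverse_semigroup mul ->
     (forall s : I, exists a w, eval_sg mul gen a w = s) ->
     forall (M : Type) (mulM : M -> M -> M) (q : list Sigma -> M),
       is_syntactic_semigroup (idem_problem_sg mul gen) mulM q ->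
       exists phi : I -> M,
         (forall a w, phi (eval_sg mul gen a w) = q (a :: w)) /\
         sg_morphism mul mulM phi /\
         surjective_map phi /\
         idempotent_pure_map mul mulM phi /\
         greatest_idempotent_pure_congruence mul (kernel phi).
Proof.
  intros I Sigma mul gen HI Hgen M mulM q [AM [Qs [Qm Qe]]].
  pose proof HI as [A _].
  assert (Rep : forall s, {p : Sigma * list Sigma | eval_sg mul gen (fst p) (snd p) = s}).
  { intros s. apply constructive_indefinite_description.
    destruct (Hgen s) as [a [w H]]. exists (a, w). exact H. }
  assert (WD : forall a w b v, eval_sg mul gen a w = eval_sg mul gen b v ->
                 q (a :: w) = q (b :: v)).
  { intros a w b v E. apply Qe; try discriminate.
    intros x y. rewrite !key_sg; auto. rewrite E. reflexivity. }
  set (phi := fun s => q (fst (proj1_sig (Rep s)) :: snd (proj1_sig (Rep s)))).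
  assert (Pe : forall a w, phi (eval_sg mul gen a w) = q (a :: w)).
  { intros a w. unfold phi. destruct (Rep (eval_sg mul gen a w)) as [[b v] E].
    simpl in *. apply WD. exact E. }
  assert (Hm : sg_morphism mul mulM phi).
  { intros s t. destruct (Hgen s) as [a [w <-]]. destruct (Hgen t) as [b [v <-]].
    rewrite <- eval_app; auto. rewrite !Pe.
    change (a :: w ++ b :: v) with ((a :: w) ++ (b :: v)).
    apply Qm; discriminate. }
  assert (Sat : forall s t, phi s = phi t -> idempotent mul s -> idempotent mul t).
  { intros s t E Hs. destruct (Hgen s) as [a [w <-]]. destruct (Hgen t) as [b [v <-]].
    rewrite !Pe in E. apply Qe in E; try discriminate.
    specialize (E [] []). simpl in E. rewrite !app_nil_r in E.
    apply Lcons. apply E. apply Lcons. exact Hs. }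
  exists phi. split; [exact Pe|]. split; [exact Hm|]. split.
  { intros m. destruct (Qs m) as [a [w <-]]. exists (eval_sg mul gen a w). apply Pe. }
  split; [apply pure_from_sat; auto|].
  split.
  - split.
    + unfold kernel. repeat split; intros; try congruence; rewrite !Hm; congruence.
    + intros a e He E. apply (Sat e a); auto.
  - intros R' [HR Hp] s t Hst. unfold kernel.
    destruct (Hgen s) as [a [w <-]]. destruct (Hgen t) as [b [v <-]].
    rewrite !Pe. apply Qe; try discriminate. intros x y. rewrite !key_sg; auto.
    pose proof HR as [_ [Sy _]].
    split; intros H.
    + eapply Hp; [exact H|]. apply Sy. apply compat_ctx; auto.
    + eapply Hp; [exact H|]. apply compat_ctx; auto.
Qed.

Lemma evalm_app (Sigma I : Type) (mul : I -> I -> I) (one : I) (gen : Sigma -> I) :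
  associative_op mul -> is_identity mul one -> forall u v,
  eval_mon mul one gen (u ++ v) = mul (eval_mon mul one gen u) (eval_mon mul one gen v).
Proof.
  intros A Id u v. unfold eval_mon. rewrite fold_left_app.
  rewrite <- fold_mul; auto. f_equal. destruct (Id (fold_left (fun x b => mul x (gen b)) u one)); auto.
Qed.

Lemma mon_part :
  forall (I Sigma : Type) (mul : I -> I -> I) (one : I) (gen : Sigma -> I),
     inverse_monoid mul one ->
     (forall s : I, exists w, eval_mon mul one gen w = s) ->
     forall (M : Type) (mulM : M -> M -> M) (oneM : M) (q : list Sigma -> M),
       is_syntactic_monoid (idem_problem_mon mul one gen) mulM oneM q ->
       exists phi : I -> M,
         (forall w, phi (eval_mon mul one gen w) = q w) /\
         sg_morphism mul mulM phi /\ phi one = oneM /\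
         surjective_map phi /\
         idempotent_pure_map mul mulM phi /\
         greatest_idempotent_pure_congruence mul (kernel phi).
Proof.
  intros I Sigma mul one gen [HI Id] Hgen M mulM oneM q [AM [IdM [Qs [Q0 [Qm Qe]]]]].
  pose proof HI as [A _].
  assert (Rep : forall s, {w | eval_mon mul one gen w = s}).
  { intros s. apply constructive_indefinite_description. apply Hgen. }
  assert (Key : forall x u y, idem_problem_mon mul one gen (x ++ u ++ y) <->
     idempotent mul (mul (mul (eval_mon mul one gen x) (eval_mon mul one gen u))
                         (eval_mon mul one gen y))).
  { intros x u y. unfold idem_problem_mon. rewrite !evalm_app; auto. rewrite A. reflexivity. }
  assert (WD : forall u v, eval_mon mul one gen u = eval_mon mul one gen v -> q u = q v).
  { intros u v E. apply Qe. intros x y. rewrite !Key. rewrite E. reflexivity. }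
  set (phi := fun s => q (proj1_sig (Rep s))).
  assert (Pe : forall w, phi (eval_mon mul one gen w) = q w).
  { intros w. unfold phi. destruct (Rep (eval_mon mul one gen w)) as [v E].
    simpl. apply WD. exact E. }
  assert (Hm : sg_morphism mul mulM phi).
  { intros s t. destruct (Hgen s) as [u <-]. destruct (Hgen t) as [v <-].
    rewrite <- evalm_app; auto. rewrite !Pe. apply Qm. }
  assert (Sat : forall s t, phi s = phi t -> idempotent mul s -> idempotent mul t).
  { intros s t E Hs. destruct (Hgen s) as [u <-]. destruct (Hgen t) as [v <-].
    rewrite !Pe in E. apply Qe in E.
    specialize (E [] []). simpl in E. rewrite !app_nil_r in E.
    apply E. exact Hs. }
  exists phi. split; [exact Pe|]. split; [exact Hm|]. split.
  { change one with (eval_mon mul one gen []). rewrite Pe. exact Q0. }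
  split.
  { intros m. destruct (Qs m) as [w <-]. exists (eval_mon mul one gen w). apply Pe. }
  split; [apply pure_from_sat; auto|].
  split.
  - split.
    + unfold kernel. repeat split; intros; try congruence; rewrite !Hm; congruence.
    + intros a e He E. apply (Sat e a); auto.
  - intros R' [HR Hp] s t Hst. unfold kernel.
    destruct (Hgen s) as [u <-]. destruct (Hgen t) as [v <-].
    rewrite !Pe. apply Qe. intros x y. rewrite !Key.
    pose proof HR as [_ [Sy [_ C]]].
    assert (H' : R' (mul (mul (eval_mon mul one gen x) (eval_mon mul one gen u))
                         (eval_mon mul one gen y))
                    (mul (mul (eval_mon mul one gen x) (eval_mon mul one gen v))
                         (eval_mon mul one gen y))).
    { apply C. apply C. exact Hst. }
    split; intros H.
    + eapply Hp; [exact H|]. apply Sy. exact H'.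
    + eapply Hp; [exact H|]. exact H'.
Qed.

Theorem lemma4 :
  (* semigroup version *)
  (forall (I Sigma : Type) (mul : I -> I -> I) (gen : Sigma -> I),
     inverse_semigroup mul ->
     (forall s : I, exists a w, eval_sg mul gen a w = s) ->
     forall (M : Type) (mulM : M -> M -> M) (q : list Sigma -> M),
       is_syntactic_semigroup (idem_problem_sg mul gen) mulM q ->
       exists phi : I -> M,
         (forall a w, phi (eval_sg mul gen a w) = q (a :: w)) /\
         sg_morphism mul mulM phi /\
         surjective_map phi /\
         idempotent_pure_map mul mulM phi /\
         greatest_idempotent_pure_congruence mul (kernel phi))
  /\
  (* monoid version *)
  (forall (I Sigma : Type) (mul : I -> I -> I) (one : I) (gen : Sigma -> I),
     inverse_monoid mul one ->
     (forall s : I, exists w, eval_mon mul one gen w = s) ->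
     forall (M : Type) (mulM : M -> M -> M) (oneM : M) (q : list Sigma -> M),
       is_syntactic_monoid (idem_problem_mon mul one gen) mulM oneM q ->
       exists phi : I -> M,
         (forall w, phi (eval_mon mul one gen w) = q w) /\
         sg_morphism mul mulM phi /\ phi one = oneM /\
         surjective_map phi /\
         idempotent_pure_map mul mulM phi /\
         greatest_idempotent_pure_congruence mul (kernel phi)).
Proof.
  split; [exact sg_part | exact mon_part].
Qed.
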